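(* Let $p$ and $q$ be distinct primes, $n=pq$, and let $e$ be a positive integer with $\gcd(e,\varphi(n))=1$ (so that there is an integer $d$ with $ed\equiv 1 \pmod{\varphi(n)}$). For a positive integer $k$, let $$T_{n,e,k}=\{x\in \mathbb{Z}_n^{\ast} : x^{e^{k}}\equiv x \pmod n \text{ and } x^{e^{m}}\not\equiv x \pmod n \text{ for every positive integer } m<k\}.$$ Then $$|T_{n,e,k}|=\sum_{d\mid k}\mu(k/d)\,\gcd(e^{d}-1,p-1)\,\gcd(e^{d}-1,q-1),$$ where the sum runs over the positive divisors $d$ of $k$ and $\mu$ is the Möbius function.
   Context: $\mathbb{Z}_n^{\ast}$ denotes a reduced residue system modulo $n$ (the residues coprime to $n$), $\varphi$ is Euler's totient function, and $\gcd(a,b)$ is the greatest common divisor (with $\gcd(0,b)=b$). *)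

(* Defs.v *)
From mathcomp Require Import all_boot all_order all_algebra.
Set Implicit Arguments. Unset Strict Implicit. Unset Printing Implicit Defensive.
Import GRing.Theory Num.Theory.
Local Open Scope ring_scope.

Definition squarefreeb (n : nat) : bool :=
  all (fun p => logn p n == 1)%N (primes n).

Definition mobius (n : nat) : int :=
  if (n == 0)%N then 0
  else if squarefreeb n then (-1) ^+ size (primes n) else 0.

Definition Tset (n e k : nat) : {set 'I_n} :=
  [set x : 'I_n | [&& coprime x n,
     (x ^ (e ^ k) == x %[mod n])%N &
     [forall m : 'I_k, (0 < m)%N ==> (x ^ (e ^ m) != x %[mod n])%N]]].

(* Main.v *)
Require Import Defs.
From mathcomp Require Import all_boot all_order all_algebra all_fingroup all_solvable.
Set Implicit Arguments. Unset Strict Implicit. Unset Printing Implicit Defensive.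
Import GRing.Theory Num.Theory.

Lemma primroot p : prime p -> exists g, coprime g p /\
  forall i j, (g ^ i == g ^ j %[mod p]) = (i == j %[mod p.-1]).
Proof.
move=> pp; have p1 := prime_gt1 pp.
case/cyclicP: (units_Zp_cyclic pp) => u defU.
have ou : #[u]%g = p.-1.
  by rewrite /order -defU card_units_Zp ?totient_prime // ltnW.
have key : forall i, (val (val (u ^+ i)%g) : nat) = (val (val u) ^ i) %% p.
  move=> i; rewrite FinRing.val_unitX -val_Zp_nat //.
  by rewrite natrX natr_Zp.
exists (val (val u)); split.
  have h := unitZpE (val (val u)) p1; rewrite natr_Zp in h.
  by rewrite coprime_sym -h; exact: valP u.
move=> i j; rewrite -ou -eq_expg_mod_order -!key.
apply/eqP/eqP => [H|->] //.
by apply/val_inj/val_inj.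
Qed.

Lemma count_dvd N a : 0 < N -> #|[set i : 'I_N | N %| i * a]| = gcdn a N.
Proof.
move=> N0; set g := gcdn a N.
have g0 : 0 < g by rewrite gcdn_gt0 N0 orbT.
set N' := N %/ g; set a' := a %/ g.
have eN : N = N' * g by rewrite divnK // dvdn_gcdr.
have ea : a = a' * g by rewrite divnK // dvdn_gcdl.
have N'0 : 0 < N' by move: N0; rewrite eN muln_gt0 => /andP[].
have co : coprime a' N'.
  by rewrite /coprime -(eqn_pmul2r g0) muln_gcdl -ea -eN mul1n.
have lt (j : 'I_g) : j * N' < N by rewrite eN mulnC ltn_pmul2l.
have E : [set i : 'I_N | N %| i * a] = (fun j => Ordinal (lt j)) @: setT.
  apply/setP => i; rewrite inE [X in X %| _]eN ea mulnA dvdn_pmul2r // Gauss_dvdl; last by rewrite coprime_sym.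
  apply/idP/imsetP => [dv|[j _ ->]]; last by rewrite /= dvdn_mull.
  have lij : i %/ N' < g by rewrite ltn_divLR // mulnC -eN.
  exists (Ordinal lij) => //; apply/val_inj => /=; rewrite divnK //.
rewrite E card_imset ?cardsT ?card_ord // => j k /(congr1 val) /= /eqP.
by rewrite eqn_pmul2r // => /eqP/val_inj.
Qed.



Lemma count_prime p a : prime p ->
  #|[set x : 'I_p | coprime x p && (x ^ a == 1 %[mod p])]| = gcdn a p.-1.
Proof.
move=> pp; have p1 := prime_gt1 pp; have p0 := ltnW p1.
have pm0 : 0 < p.-1 by rewrite -subn1 subn_gt0.
have [g [cg Hg]] := primroot pp.
pose h (i : 'I_p.-1) : 'I_p := Ordinal (ltn_pmod (g ^ i) p0).
have hinj : injective h.
  move=> i j /(congr1 val) /= /eqP; rewrite Hg => /eqP.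
  by rewrite !modn_small // => /val_inj.
pose C := [set x : 'I_p | coprime x p].
have cC : #|C| = p.-1.
  have -> : C = [set~ Ordinal p0].
    apply/setP => x; rewrite !inE coprime_sym prime_coprime // /dvdn modn_small //.
  by rewrite cardsC1 card_ord.
have HC : h @: setT = C.
  apply/eqP; rewrite eqEcard; apply/andP; split.
    by apply/subsetP => _ /imsetP[i _ ->]; rewrite inE coprime_modl coprimeXl.
  by rewrite card_imset // cardsT card_ord cC.
rewrite -(count_dvd a pm0).
rewrite -(card_imset _ hinj); apply: eq_card => x.
rewrite inE; apply/andP/imsetP => [[cx xa]|[i]].
  have : x \in C by rewrite inE.
  rewrite -HC => /imsetP[i _ xi]; exists i => //; rewrite inE.
  move: xa; rewrite xi /= modnXm -expnM -(expn0 g) Hg.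
  by rewrite mod0n /dvdn.
rewrite inE => dv ->; split; first by rewrite /= coprime_modl coprimeXl.
by rewrite /= modnXm -expnM -(expn0 g) Hg mod0n.
Qed.

Lemma crt_count p q (P Q : nat -> bool) : coprime p q -> 0 < p -> 0 < q ->
  #|[set x : 'I_(p * q) | P (x %% p) && Q (x %% q)]| =
  #|[set x : 'I_p | P x]| * #|[set y : 'I_q | Q y]|.
Proof.
move=> co p0 q0.
pose f (x : 'I_(p * q)) : 'I_p * 'I_q :=
  (Ordinal (ltn_pmod x p0), Ordinal (ltn_pmod x q0)).
have finj : injective f.
  move=> x y [] /eqP ex /eqP ey; apply/val_inj/eqP.
  have := chinese_remainder co x y; rewrite ex ey !modn_small //.
have fon : forall z, z \in codom f.
  by apply: inj_card_onto => //; rewrite card_prod !card_ord.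
rewrite -cardsX -(card_imset _ finj); apply: eq_card => z.
apply/imsetP/idP => [[x]|].
  by rewrite !inE => /andP[Px Qx] ->; rewrite /= Px Qx.
rewrite !inE /= => /andP[Pz Qz]; have /codomP[x ex] := fon z.
exists x => //; rewrite inE; move: Pz Qz; rewrite ex /= => -> ->.
done.
Qed.



Lemma eqn_modMr n x a b : coprime x n ->
  (a * x == b * x %[mod n]) = (a == b %[mod n]).
Proof.
move=> co; wlog le: a b / b <= a.
  move=> H; case: (leqP b a) => [|/ltnW] h; first exact: H.
  by rewrite eq_sym [RHS]eq_sym; exact: H.
by rewrite !eqn_mod_dvd ?leq_mul2r ?le ?orbT // -mulnBl Gauss_dvdl // coprime_sym.
Qed.

Lemma modE_1 r x E : 0 < E -> coprime x r ->
  (x ^ E == x %[mod r]) = ((x %% r) ^ (E - 1) == 1 %[mod r]).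
Proof.
move=> E0 co; rewrite modnXm.
have -> : x ^ E = x ^ (E - 1) * x by rewrite -expnSr subn1 prednK.
by rewrite -[X in _ == X %[mod _]](mul1n x) eqn_modMr.
Qed.

Lemma countS p q e m : prime p -> prime q -> p != q -> 0 < e ->
  #|[set x : 'I_(p * q) | coprime x (p * q) && (x ^ (e ^ m) == x %[mod p * q])]|
  = (gcdn (e ^ m - 1) (p - 1) * gcdn (e ^ m - 1) (q - 1))%N.
Proof.
move=> pp pq npq e0.
have co : coprime p q by rewrite prime_coprime // dvdn_prime2.
have E0 : 0 < e ^ m by rewrite expn_gt0 e0.
rewrite !subn1 -!count_prime //.
rewrite -(crt_count (fun a => coprime a p && (a ^ (e ^ m).-1 == 1 %[mod p]))
   (fun a => coprime a q && (a ^ (e ^ m).-1 == 1 %[mod q]))) ?prime_gt0 //; apply: eq_card => x; rewrite !inE.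
rewrite coprimeMr chinese_remainder // -(coprime_modl x p) -(coprime_modl x q).
rewrite !coprime_modl; case cp: (coprime x p); case cq: (coprime x q); rewrite /= ?andbF //.
by rewrite (modE_1 E0 cp) (modE_1 E0 cq) !subn1.
Qed.

Lemma orbit_ord n e x : 2 < n -> coprime e (totient n) -> coprime x n ->
  exists2 o, 0 < o & forall m, (x ^ (e ^ m) == x %[mod n]) = (o %| m).
Proof.
move=> n2 ce cx.
have shift a b : (x ^ (e ^ a) == x %[mod n]) ->
    (x ^ (e ^ (a + b)) == x %[mod n]) = (x ^ (e ^ b) == x %[mod n]).
  by move=> /eqP Ha; rewrite expnD expnM -(modnXm (e ^ b) n (x ^ (e ^ a))) Ha modnXm.
set t := totient (totient n).
have t0 : 0 < t by rewrite /t !totient_gt0 (ltn_trans _ n2).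
have phi1 : 1 < totient n by rewrite totient_gt1.
have Ht : x ^ (e ^ t) == x %[mod n].
  have Ee := Euler_exp_totient ce; rewrite (modn_small phi1) in Ee.
  have Ex : x ^ totient n %% n = 1 %% n := Euler_exp_totient cx.
  rewrite (divn_eq (e ^ t) (totient n)) Ee expnD mulnC expnM expn1.
  set k := e ^ t %/ totient n.
  rewrite -expnM (mulnC k) expnM.
  rewrite -(modnMmr x ((x ^ totient n) ^ k) n) -(modnXm k n (x ^ totient n)) Ex.
  by rewrite modnXm exp1n modnMmr muln1.
pose P m := (0 < m) && (x ^ (e ^ m) == x %[mod n]).
have exP : exists m, P m by exists t; rewrite /P t0 Ht.
case: (ex_minnP exP) => o /andP[o0 Zo] omin.
exists o => // m; elim/ltn_ind: m => m IH.
case: (ltnP m o) => [lmo|lom].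
  case: m lmo IH => [|m'] lmo IH; first by rewrite expn0 expn1 dvdn0 eqxx.
  have -> : (o %| m'.+1) = false.
    by apply/negbTE/negP => /dvdn_leq => /(_ isT); rewrite leqNgt lmo.
  apply/negbTE/negP => Z; have := omin m'.+1; rewrite /P Z => /(_ isT).
  by rewrite leqNgt lmo.
rewrite -(subnKC lom) shift // dvdn_addr //.
by rewrite IH // ltn_subrL o0 (leq_trans o0 lom).
Qed.


Lemma card_sum (T : finType) (A : {set T}) : #|A| = \sum_(x : T) (x \in A).
Proof. by rewrite -sum1_card big_mkcond; apply: eq_bigr => x _; case: (x \in A). Qed.

Lemma countA n e m : 2 < n -> coprime e (totient n) -> 0 < m ->
  #|[set x : 'I_n | coprime x n && (x ^ (e ^ m) == x %[mod n])]| =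
  \sum_(d <- divisors m) #|Tset n e d|.
Proof.
move=> n2 ce m0.
rewrite card_sum (eq_bigr (fun d => \sum_(x : 'I_n) (x \in Tset n e d))); last first.
  by move=> d _; rewrite card_sum.
rewrite exchange_big /=; apply: eq_bigr => x _; rewrite inE.
case cx: (coprime x n); last first.
  by rewrite big1 // => d _; rewrite inE cx.
have [o o0 Ho] := orbit_ord n2 ce cx.
have key d : 0 < d -> (x \in Tset n e d) = (d == o).
  move=> d0; rewrite inE cx Ho /=.
  apply/andP/eqP => [[od /forallP H]|->].
    apply/eqP; apply/negP => /negP ndo.
    have lod : o < d by rewrite ltn_neqAle eq_sym ndo dvdn_leq.
    by have := H (Ordinal lod); rewrite /= o0 Ho dvdnn.
  split; first exact: dvdnn.
  apply/forallP => j; apply/implyP => j0; rewrite Ho; apply/negP => /dvdn_leq => /(_ j0).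
  by rewrite leqNgt ltn_ord.
rewrite Ho (eq_big_seq (fun d => nat_of_bool (d == o))); last first.
  by move=> d; rewrite -dvdn_divisors // => /(dvdn_gt0 m0) /key ->.
transitivity (\sum_(d <- divisors m | d == o) 1); last first.
  by rewrite big_mkcond; apply: eq_bigr => d _; case: (d == o).
by rewrite sum1_count count_uniq_mem ?divisors_uniq // -dvdn_divisors.
Qed.

Lemma perm_mult r n : 0 < r -> r %| n -> 0 < n ->
  perm_eq [seq d <- divisors n | r %| d] (map (muln r) (divisors (n %/ r))).
Proof.
move=> r0 rn n0; have nr0 : 0 < n %/ r by rewrite divn_gt0 // dvdn_leq.
apply: uniq_perm; first by rewrite filter_uniq ?divisors_uniq.
  by rewrite map_inj_uniq ?divisors_uniq // => a b /eqP; rewrite eqn_pmul2l // => /eqP.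
move=> d; rewrite mem_filter -dvdn_divisors //; apply/andP/mapP => [[rd dn]|[j]].
  exists (d %/ r).
    by rewrite -dvdn_divisors // dvdn_divRL // divnK.
  by rewrite mulnC divnK.
rewrite -dvdn_divisors // => jn ->; rewrite dvdn_mulr //.
by rewrite -[n in _ %| n](divnK rn) [n %/ r * r]mulnC dvdn_pmul2l.
Qed.

Lemma perm_copr r n : prime r -> r %| n -> 0 < n ->
  perm_eq [seq d <- divisors n | ~~ (r %| d)] [seq d <- divisors (n %/ r) | ~~ (r %| d)].
Proof.
move=> pr rn n0; have r0 := prime_gt0 pr.
have nr0 : 0 < n %/ r by rewrite divn_gt0 // dvdn_leq.
apply: uniq_perm; rewrite ?filter_uniq ?divisors_uniq //.
move=> d; rewrite !mem_filter -!dvdn_divisors //.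
case rd: (r %| d) => //=.
have cdr : coprime d r by rewrite coprime_sym prime_coprime // rd.
by rewrite -{1}(divnK rn) Gauss_dvdl.
Qed.

Lemma perm_sub d k : d %| k -> 0 < k ->
  perm_eq [seq c <- divisors k | c %| d] (divisors d).
Proof.
move=> dk k0; have d0 : 0 < d by apply: dvdn_gt0 dk.
apply: uniq_perm; rewrite ?filter_uniq ?divisors_uniq //.
move=> c; rewrite mem_filter -!dvdn_divisors //.
by apply/andP/idP => [[]//|cd]; split=> //; apply: dvdn_trans dk.
Qed.

Lemma divK m j : j %| m -> 0 < m -> m %/ (m %/ j) = j.
Proof.
move=> jm m0; have j0 : 0 < j by apply: dvdn_gt0 jm.
by rewrite divnA // mulKn.
Qed.

Lemma perm_inv m : 0 < m ->
  perm_eq (map (fun j => m %/ j) (divisors m)) (divisors m).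
Proof.
move=> m0; apply: uniq_perm; rewrite ?divisors_uniq //.
  rewrite map_inj_in_uniq ?divisors_uniq // => a b.
  rewrite -!dvdn_divisors // => am bm e.
  by rewrite -(divK am m0) e divK.
move=> d; apply/mapP/idP => [[j]|dm].
  by rewrite -!dvdn_divisors // => jm ->; apply: dvdn_div.
rewrite -dvdn_divisors // in dm.
exists (m %/ d); first by rewrite -dvdn_divisors // dvdn_div.
by rewrite divK.
Qed.

Local Open Scope ring_scope.

Lemma mobius1 : mobius 1 = 1.
Proof. by []. Qed.

Lemma mobiusM1 r d : prime r -> ~~ (r %| d)%N -> mobius (r * d) = - mobius d.
Proof.
move=> pr nrd; have d0 : (0 < d)%N by case: d nrd => //; rewrite dvdn0.
 have r0 := prime_gt0 pr.
have rd0 : (0 < r * d)%N by rewrite muln_gt0 r0.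
have nr : r \notin primes d by rewrite mem_primes pr d0 /= nrd.
have pe : perm_eq (primes (r * d)) (r :: primes d).
  apply: uniq_perm; rewrite /= ?nr ?primes_uniq //.
  move=> z; rewrite in_cons !mem_primes rd0 d0 /=.
  case pz: (prime z) => //=; first by rewrite Euclid_dvdM // dvdn_prime2.
  by rewrite orbF; apply/esym/negbTE/eqP => zr; move: pz; rewrite zr pr.
rewrite /mobius !eqn0Ngt rd0 d0 /= /squarefreeb (perm_all _ pe) (perm_size pe) /=.
have -> : (logn r (r * d) == 1)%N.
  by rewrite lognM // logn_prime // eqxx logn_coprime // prime_coprime.
have -> : all (fun p => logn p (r * d) == 1)%N (primes d) = all (fun p => logn p d == 1)%N (primes d).
  apply: eq_in_all => z zd; rewrite lognM // logn_prime //.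
  have zr : (z == r) = false by apply/negbTE; apply: contra nr => /eqP <-.
  by rewrite zr add0n.
by case: (all (fun p => logn p d == 1)%N (primes d)); rewrite ?oppr0 // exprS mulN1r.
Qed.

Lemma mobiusM0 r d : prime r -> (r %| d)%N -> mobius (r * d) = 0.
Proof.
move=> pr rd; have r0 := prime_gt0 pr.
case: (posnP d) => [->|d0]; first by rewrite muln0.
have rd0 : (0 < r * d)%N by rewrite muln_gt0 r0.
rewrite /mobius eqn0Ngt rd0 /= /squarefreeb.
case: allP => // H; have := H r; rewrite mem_primes pr rd0 dvdn_mulr // => /(_ isT).
rewrite lognM // logn_prime // eqxx add1n eqSS => /eqP l0.
by move: (logn_gt0 r d); rewrite l0 mem_primes pr d0 rd.
Qed.



Lemma mobius_sum n : (0 < n)%N -> \sum_(d <- divisors n) mobius d = (n == 1)%:R.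
Proof.
move=> n0; case: (ltngtP n 1) => [|n1|->]; first by rewrite ltnNge n0.
  set r := pdiv n; have pr : prime r := pdiv_prime n1.
  have rn : (r %| n)%N := pdiv_dvd n.
  have r0 := prime_gt0 pr.
  have nr0 : (0 < n %/ r)%N by rewrite divn_gt0 // dvdn_leq.
  rewrite (bigID (fun d => r %| d)%N) /=.
  have E1 : \sum_(d <- divisors n | (r %| d)%N) mobius d = \sum_(d <- divisors (n %/ r)) mobius (r * d).
    by rewrite -big_filter (perm_big _ (perm_mult r0 rn n0)) big_map.
  have E2 : \sum_(d <- divisors n | ~~ (r %| d)%N) mobius d = \sum_(d <- [seq d <- divisors (n %/ r) | ~~ (r %| d)%N]) mobius d.
    by rewrite -big_filter (perm_big _ (perm_copr pr rn n0)).
  rewrite E1 E2 (bigID (fun d => r %| d)%N) /= big1 ?add0r; last first.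
    by move=> d rd; rewrite mobiusM0.
  rewrite (eq_bigr (fun d => - mobius d)); last first.
    by move=> d rd; rewrite mobiusM1.
  by rewrite sumrN big_filter addNr.
have -> : divisors 1 = [:: 1]%N by [].
by rewrite big_cons big_nil addr0.
Qed.

Lemma mobius_div c k : (c %| k)%N -> (0 < k)%N ->
  \sum_(d <- divisors k | (c %| d)%N) mobius (k %/ d) = (c == k)%:R.
Proof.
move=> ck k0; have c0 : (0 < c)%N := dvdn_gt0 k0 ck.
have m0 : (0 < k %/ c)%N by rewrite divn_gt0 // dvdn_leq.
rewrite -big_filter (perm_big _ (perm_mult c0 ck k0)) big_map.
under eq_bigr do rewrite divnMA.
rewrite -(big_map (fun j => k %/ c %/ j)%N xpredT mobius) (perm_big _ (perm_inv m0)).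
rewrite mobius_sum //; congr (_%:R); congr (nat_of_bool _).
apply/idP/idP => [/eqP e|/eqP ->]; last by rewrite divnn k0.
by rewrite -(divnK ck) e mul1n.
Qed.

Lemma mobius_inv (f F : nat -> int) k :
  (forall m, (0 < m)%N -> F m = \sum_(d <- divisors m) f d) -> (0 < k)%N ->
  \sum_(d <- divisors k) mobius (k %/ d) * F d = f k.
Proof.
move=> HF k0.
transitivity (\sum_(d <- divisors k) \sum_(c <- divisors k | (c %| d)%N) mobius (k %/ d) * f c).
  apply: eq_big_seq => d; rewrite -dvdn_divisors // => dk.
  by rewrite HF ?(dvdn_gt0 k0 dk) // -(perm_big _ (perm_sub dk k0)) big_filter mulr_sumr.
rewrite (exchange_big_dep xpredT) //=.
transitivity (\sum_(c <- divisors k) (c == k)%:R * f c).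
  apply: eq_big_seq => c; rewrite -dvdn_divisors // => ck.
  by rewrite -mulr_suml mobius_div.
rewrite (bigD1_seq k) ?divisors_id ?divisors_uniq //= eqxx mul1r big1.
  exact: addr0.
by move=> c /negbTE ->; rewrite mul0r.
Qed.

Unset Implicit Arguments.

Theorem theorem1 (p q e k : nat) :
  prime p -> prime q -> p != q -> (0 < e)%N ->
  coprime e (totient (p * q)) -> (0 < k)%N ->
  (#|Tset (p * q) e k|%:Z : int) =
    \sum_(d <- divisors k)
       mobius (k %/ d) * (gcdn (e ^ d - 1) (p - 1) * gcdn (e ^ d - 1) (q - 1))%N%:Z.
Proof.
move=> pp pq npq e0 ce k0.
have n2 : (2 < p * q)%N.
  have p2 := prime_gt1 pp; have q2 := prime_gt1 pq.
  by apply: (@leq_trans (2 * 2)) => //; apply: leq_mul.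
have H : forall m, (0 < m)%N ->
    (gcdn (e ^ m - 1) (p - 1) * gcdn (e ^ m - 1) (q - 1))%N%:Z =
    \sum_(d <- divisors m) (#|Tset (p * q) e d|)%:Z.
  move=> m m0; rewrite -(countS m pp pq npq e0) (countA n2 ce m0).
  by rewrite (big_morph Posz PoszD (erefl _)).
exact: (esym (@mobius_inv (fun m => (#|Tset (p * q) e m|)%:Z)
  (fun d => (gcdn (e ^ d - 1) (p - 1) * gcdn (e ^ d - 1) (q - 1))%N%:Z) k H k0)).
Qed.
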